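(* Let $\mathbf X=\{X_n\}$ and $\mathbf Y=\{Y_n\}$ be general sources such that $$\inf_{0<\epsilon<1}\ \liminf_{n\to\infty}\ \inf_{0\le\delta<1-\epsilon}\{c_n^x(\delta+\epsilon)-c_n^y(\delta)\}\ \ge 0 .$$ Then there exist joint pmfs $P_{X_nY_n}$ with marginals $P_{X_n}$ and $P_{Y_n}$, for each $n$, such that for every $\gamma>0$ $$\lim_{n\to\infty}P_{X_nY_n}\Big\{\tfrac1n\log\tfrac{1}{P_{X_n}(X_n)}-\tfrac1n\log\tfrac{1}{P_{Y_n}(Y_n)}<-\gamma\Big\}=0 .$$ In other words, $\text{p-}\liminf_{n\to\infty}\{\frac1n\log\frac{1}{P_{X_n}(X_n)}-\frac1n\log\frac{1}{P_{Y_n}(Y_n)}\}\ge0$ under $P_{X_nY_n}$.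
   Context: Logarithms are natural. A general source $\mathbf X=\{X_n\}_{n\ge1}$ is a sequence of random variables, $X_n$ taking values in a countable set $\mathcal X_n$, with no consistency requirements between different $n$. Similarly $Y_n$ takes values in a countable set $\mathcal Y_n$. For a random variable $Z$ on a countable set $\mathcal Z$ with pmf $P_Z$, list the elements of positive probability as $z_1,z_2,\dots$ (a finite or countably infinite list) with $P_Z(z_1)\ge P_Z(z_2)\ge\cdots$ (ties broken arbitrarily). Set $\delta_0=0$ and $\delta_k=\sum_{i\le k}P_Z(z_i)$. For $\delta\in[0,1)$ define $c^z(\delta)=\log\frac{1}{P_Z(z_k)}$, where $k$ is the unique index with $\delta\in[\delta_{k-1},\delta_k)$. Here $c_n^x$ and $c_n^y$ denote this function built from $P_{X_n}$ and from $P_{Y_n}$ respectively. *)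

(* Defs.v *)
From Stdlib Require Import Reals Lra Lia ClassicalEpsilon.
Open Scope R_scope.

(* A pmf on a countable set, the set being (w.l.o.g.) encoded into nat. *)
Definition is_pmf (P : nat -> R) : Prop :=
  (forall z, 0 <= P z) /\ infinite_sum P 1.

(* Index domain of a finite (Some m : indices 0..m-1) or infinite (None) list. *)
Definition in_dom (K : option nat) (k : nat) : Prop :=
  match K with None => True | Some m => (k < m)%nat end.

(* e : 0,1,2,... (within dom K) lists exactly the elements of positive
   probability, without repetition, in non-increasing order of probability.
   (e k is the paper's z_{k+1}.) Ties are broken arbitrarily. *)
Definition is_dec_enum (P : nat -> R) (e : nat -> nat) (K : option nat) : Prop :=
  (forall k, in_dom K k -> 0 < P (e k)) /\
  (forall k1 k2, in_dom K k1 -> in_dom K k2 -> e k1 = e k2 -> k1 = k2) /\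
  (forall z, 0 < P z -> exists k, in_dom K k /\ e k = z) /\
  (forall k, in_dom K (S k) -> P (e (S k)) <= P (e k)).

(* psum P e k = delta_k = P(z_1)+...+P(z_k) *)
Fixpoint psum (P : nat -> R) (e : nat -> nat) (k : nat) : R :=
  match k with
  | O => 0
  | S k' => psum P e k' + P (e k')
  end.

(* c(delta) = log (1 / P(z_k)) where delta in [delta_{k-1}, delta_k). *)
Definition cfun (P : nat -> R) (e : nat -> nat) (K : option nat) (delta : R) : R :=
  epsilon (inhabits 0) (fun v => exists k, in_dom K k /\
     psum P e k <= delta < psum P e (S k) /\ v = ln (/ P (e k))).

Definition is_coupling (PX PY : nat -> R) (Q : nat -> nat -> R) : Prop :=
  (forall x y, 0 <= Q x y) /\
  (forall x, infinite_sum (fun y => Q x y) (PX x)) /\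
  (forall y, infinite_sum (fun x => Q x y) (PY y)).

Definition prob_is (Q : nat -> nat -> R) (A : nat -> nat -> Prop)
  (Adec : forall x y, {A x y} + {~ A x y}) (p : R) : Prop :=
  exists r : nat -> R,
    (forall x, infinite_sum (fun y => if Adec x y then Q x y else 0) (r x)) /\
    infinite_sum r p.

(* Main.v *)
Require Import Defs.
From Stdlib Require Import Reals Lra Lia ClassicalEpsilon.
Open Scope R_scope.

Lemma isum_growing (f : nat -> R) : (forall k, 0 <= f k) -> Un_growing (sum_f_R0 f).
Proof. intros H n. simpl. specialize (H (S n)). lra. Qed.

Lemma part_le (f : nat -> R) L N : (forall k, 0 <= f k) -> infinite_sum f L -> sum_f_R0 f N <= L.
Proof. intros H HL. apply (growing_ineq (sum_f_R0 f)); [apply isum_growing; auto | exact HL]. Qed.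

Lemma isum_nonneg (f : nat -> R) L : (forall k, 0 <= f k) -> infinite_sum f L -> 0 <= L.
Proof. intros H HL. apply Rle_trans with (sum_f_R0 f 0). simpl; auto. apply part_le; auto. Qed.

Lemma isum_le (f g : nat -> R) F G : (forall k, f k <= g k) -> infinite_sum f F -> infinite_sum g G -> F <= G.
Proof. intros H HF HG. eapply Rle_cv_lim; [|exact HF|exact HG].
  intro n; apply sum_Rle; auto. Qed.

Lemma isum_compare (f g : nat -> R) G : (forall k, 0 <= f k <= g k) -> infinite_sum g G ->
  exists F, infinite_sum f F /\ F <= G.
Proof. intros H HG.
  assert (Hg : forall k, 0 <= g k) by (intro k; specialize (H k); lra).
  destruct (Un_cv_crit (sum_f_R0 f)) as [F HF].
  - apply isum_growing; intro k; apply H.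
  - exists G. intros r [i ->]. apply Rle_trans with (sum_f_R0 g i).
    apply sum_Rle; intros; apply H. apply part_le; auto.
  - exists F; split; auto. apply (isum_le f g); auto. intro k; apply H.
Qed.

Lemma isum_ext (f g : nat -> R) L : (forall k, f k = g k) -> infinite_sum f L -> infinite_sum g L.
Proof. intros H HL eps Heps. destruct (HL eps Heps) as [N HN]. exists N. intros n Hn.
  rewrite <- (sum_eq f g n). auto. intros; auto. Qed.

Lemma isum_plus (f g : nat -> R) F G : infinite_sum f F -> infinite_sum g G ->
  infinite_sum (fun k => f k + g k) (F + G).
Proof. intros HF HG.
  assert (H := CV_plus (sum_f_R0 f) (sum_f_R0 g) F G HF HG).
  intros eps Heps. destruct (H eps Heps) as [N HN]. exists N. intros n Hn.
  rewrite plus_sum. apply HN; auto. Qed.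

Definition upd (g : nat -> R) (j : nat) : nat -> R := fun k => if Nat.eqb k j then 0 else g k.

Lemma sum_upd g j M : (j <= M)%nat -> sum_f_R0 (upd g j) M + g j = sum_f_R0 g M.
Proof. induction M; intros Hj.
  - assert (j = 0%nat) by lia. subst. simpl. unfold upd. simpl. lra.
  - destruct (Nat.eq_dec j (S M)) as [->|Hne].
    + simpl. unfold upd at 2. rewrite Nat.eqb_refl.
      rewrite (sum_eq (upd g (S M)) g). lra.
      intros i Hi. unfold upd. destruct (Nat.eqb_spec i (S M)); [lia|auto].
    + simpl. rewrite <- IHM by lia. unfold upd at 2.
      destruct (Nat.eqb_spec (S M) j); [lia|]. lra.
Qed.

Lemma upd_nonneg g j : (forall k, 0 <= g k) -> forall k, 0 <= upd g j k.
Proof. intros H k. unfold upd. destruct (Nat.eqb k j); auto; lra. Qed.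

Lemma fin_inj : forall N (f g : nat -> R) (s : nat -> nat) M,
  (forall z, 0 <= f z) -> (forall k, 0 <= g k) ->
  (forall z, (z <= N)%nat -> 0 < f z -> (s z <= M)%nat /\ g (s z) = f z) ->
  (forall z1 z2, (z1 <= N)%nat -> (z2 <= N)%nat -> 0 < f z1 -> 0 < f z2 -> s z1 = s z2 -> z1 = z2) ->
  sum_f_R0 f N <= sum_f_R0 g M.
Proof.
  induction N; intros f g s M Hf Hg Hs Hinj.
  - simpl. destruct (Rle_lt_or_eq_dec 0 (f 0%nat) (Hf 0%nat)) as [Hp|He].
    + destruct (Hs 0%nat (le_n _) Hp) as [H1 H2]. rewrite <- H2.
      rewrite <- (sum_upd g (s 0%nat) M H1).
      assert (0 <= sum_f_R0 (upd g (s 0%nat)) M) by (apply cond_pos_sum, upd_nonneg; auto). lra.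
    + rewrite <- He. apply cond_pos_sum; auto.
  - simpl. destruct (Rle_lt_or_eq_dec 0 (f (S N)) (Hf (S N))) as [Hp|He].
    + destruct (Hs (S N) (le_n _) Hp) as [H1 H2].
      rewrite <- (sum_upd g (s (S N)) M H1). rewrite H2.
      cut (sum_f_R0 f N <= sum_f_R0 (upd g (s (S N))) M). lra.
      apply (IHN f _ s M Hf (upd_nonneg g _ Hg)).
      * intros z Hz Hfz. destruct (Hs z (le_S _ _ Hz) Hfz) as [A B]. split; auto.
        unfold upd. destruct (Nat.eqb_spec (s z) (s (S N))) as [E|E]; auto.
        apply Hinj in E; auto; lia.
      * intros; apply Hinj; auto.
    + rewrite <- He. rewrite Rplus_0_r. apply (IHN f g s M); auto.
Qed.

Lemma bound_fin (s : nat -> nat) N : exists M, forall z, (z <= N)%nat -> (s z <= M)%nat.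
Proof. induction N.
  - exists (s 0%nat). intros z Hz. assert (z = 0%nat) by lia. subst; lia.
  - destruct IHN as [M HM]. exists (Nat.max M (s (S N))). intros z Hz.
    destruct (Nat.eq_dec z (S N)) as [->|]; [lia|]. specialize (HM z). lia.
Qed.

Lemma cofinal (f g : nat -> R) L : (forall z, 0 <= f z) -> (forall k, 0 <= g k) ->
  infinite_sum g L -> (forall N, exists M, sum_f_R0 f N <= sum_f_R0 g M) ->
  (forall M, exists N, sum_f_R0 g M <= sum_f_R0 f N) -> infinite_sum f L.
Proof. intros Hf Hg HL H1 H2 eps Heps.
  destruct (HL eps Heps) as [M0 HM0]. specialize (HM0 M0 (le_n _)).
  destruct (H2 M0) as [N0 HN0]. exists N0. intros n Hn.
  destruct (H1 n) as [M HM]. assert (sum_f_R0 g M <= L) by (apply part_le; auto).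
  assert (sum_f_R0 f n >= sum_f_R0 f N0) by (apply growing_prop; auto; apply isum_growing; auto).
  unfold R_dist in *. apply Rabs_def1. lra.
  apply Rabs_def2 in HM0. lra.
Qed.

Definition domb (K : option nat) (k : nat) : bool :=
  match K with None => true | Some m => Nat.ltb k m end.

Lemma domb_iff K k : domb K k = true <-> in_dom K k.
Proof. destruct K; simpl. apply Nat.ltb_lt. tauto. Qed.

Lemma reindex (f : nat -> R) (e : nat -> nat) K L :
  (forall z, 0 <= f z) ->
  (forall k1 k2, in_dom K k1 -> in_dom K k2 -> e k1 = e k2 -> k1 = k2) ->
  (forall z, 0 < f z -> exists k, in_dom K k /\ e k = z) ->
  (infinite_sum f L <-> infinite_sum (fun k => if domb K k then f (e k) else 0) L).
Proof. intros Hf Hinj Hsur.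
  set (g := fun k => if domb K k then f (e k) else 0).
  assert (Hg : forall k, 0 <= g k) by (intro k; unfold g; destruct (domb K k); auto; lra).
  set (sg := fun z => epsilon (inhabits 0%nat) (fun k => in_dom K k /\ e k = z)).
  assert (Hsg : forall z, 0 < f z -> in_dom K (sg z) /\ e (sg z) = z).
  { intros z Hz. unfold sg. apply epsilon_spec. auto. }
  assert (A : forall N, exists M, sum_f_R0 f N <= sum_f_R0 g M).
  { intro N. destruct (bound_fin sg N) as [M HM]. exists M.
    apply (fin_inj N f g sg M Hf Hg).
    - intros z Hz Hfz. split; auto. destruct (Hsg z Hfz) as [D E]. unfold g.
      apply domb_iff in D. rewrite D, E. auto.
    - intros z1 z2 _ _ H1 H2 E. destruct (Hsg z1 H1) as [_ E1]. destruct (Hsg z2 H2) as [_ E2].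
      rewrite <- E1, <- E2, E. auto. }
  assert (B : forall M, exists N, sum_f_R0 g M <= sum_f_R0 f N).
  { intro M. destruct (bound_fin e M) as [N HN]. exists N.
    apply (fin_inj M g f e N Hg Hf).
    - intros k Hk Hgk. split; auto. unfold g in *. destruct (domb K k); auto; lra.
    - intros k1 k2 _ _ H1 H2 E. unfold g in *.
      destruct (domb K k1) eqn:D1; [|lra]. destruct (domb K k2) eqn:D2; [|lra].
      apply Hinj; auto; apply domb_iff; auto. }
  split; intro H.
  - apply (cofinal g f L); auto.
  - apply (cofinal f g L); auto.
Qed.

Definition cap (K : option nat) (n : nat) : nat :=
  match K with None => n | Some m => Nat.min n m end.

Lemma tele_id (F : nat -> R) K N :
  sum_f_R0 (fun k => if domb K k then F (S k) - F k else 0) N = F (cap K (S N)) - F 0%nat.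
Proof. induction N.
  - simpl sum_f_R0. destruct K as [m|]; unfold cap, domb; [|lra].
    destruct (Nat.ltb_spec 0 m).
    + replace (Nat.min 1 m) with 1%nat by lia. lra.
    + replace (Nat.min 1 m) with 0%nat by lia. lra.
  - rewrite tech5, IHN. destruct K as [m|]; unfold cap, domb; [|lra].
    destruct (Nat.ltb_spec (S N) m).
    + replace (Nat.min (S N) m) with (S N) by lia.
      replace (Nat.min (S (S N)) m) with (S (S N)) by lia. lra.
    + replace (Nat.min (S (S N)) m) with (Nat.min (S N) m) by lia. lra.
Qed.

Lemma psum_mono P e : (forall z, 0 <= P z) -> forall k d, psum P e k <= psum P e (k + d).
Proof. intros H k d. induction d. rewrite Nat.add_0_r; lra.
  rewrite Nat.add_succ_r. simpl. specialize (H (e (k + d)%nat)). lra. Qed.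

Lemma psum_mono' P e : (forall z, 0 <= P z) -> forall k k', (k <= k')%nat -> psum P e k <= psum P e k'.
Proof. intros H k k' Hk. replace k' with (k + (k' - k))%nat by lia. apply psum_mono; auto. Qed.

Lemma psum_nonneg P e : (forall z, 0 <= P z) -> forall k, 0 <= psum P e k.
Proof. intros H k. apply (psum_mono' P e H 0%nat k). lia. Qed.

Lemma total_mass P e K : is_pmf P -> is_dec_enum P e K ->
  infinite_sum (fun k => if domb K k then P (e k) else 0) 1.
Proof. intros [H0 H1] [A [B [C D]]]. apply (reindex P e K 1); auto. Qed.

Lemma psum_cv P e K : is_pmf P -> is_dec_enum P e K ->
  Un_cv (fun N => psum P e (cap K (S N))) 1.
Proof. intros HP HE. assert (T := total_mass P e K HP HE).
  intros eps Heps. destruct (T eps Heps) as [N HN]. exists N. intros n Hn.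
  specialize (HN n Hn).
  rewrite (sum_eq _ (fun k => if domb K k then psum P e (S k) - psum P e k else 0)) in HN.
  rewrite tele_id in HN. simpl psum at 2 in HN. rewrite Rminus_0_r in HN. exact HN.
  intros i _. destruct (domb K i); simpl; lra.
Qed.

Lemma psum_le1 P e K : is_pmf P -> is_dec_enum P e K ->
  forall k, in_dom K k -> psum P e (S k) <= 1.
Proof. intros HP HE k Hk. assert (T := total_mass P e K HP HE).
  assert (Hn : forall z, 0 <= (fun k => if domb K k then P (e k) else 0) z).
  { intro z. destruct (domb K z); [apply HP|lra]. }
  assert (L := part_le _ 1 k Hn T).
  rewrite (sum_eq _ (fun k => if domb K k then psum P e (S k) - psum P e k else 0)) in L.
  rewrite tele_id in L. simpl psum at 2 in L.
  replace (cap K (S k)) with (S k) in L. lra.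
  destruct K; unfold cap; [unfold in_dom in Hk; lia|reflexivity].
  intros i _. destruct (domb K i); simpl; lra.
Qed.

Lemma tele P e K (h : R -> R) : is_pmf P -> is_dec_enum P e K ->
  (forall u v, Rabs (h u - h v) <= Rabs (u - v)) ->
  infinite_sum (fun k => if domb K k then h (psum P e (S k)) - h (psum P e k) else 0) (h 1 - h 0).
Proof. intros HP HE hL eps Heps. destruct (psum_cv P e K HP HE eps Heps) as [N HN].
  exists N. intros n Hn. rewrite (tele_id (fun k => h (psum P e k))). simpl psum at 2.
  unfold R_dist in *. specialize (HN n Hn).
  replace (h (psum P e (cap K (S n))) - h 0 - (h 1 - h 0)) with (h (psum P e (cap K (S n))) - h 1) by ring.
  eapply Rle_lt_trans; [apply hL|exact HN].
Qed.

Definition rank (e : nat -> nat) (K : option nat) (x : nat) : nat :=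
  epsilon (inhabits 0%nat) (fun k => in_dom K k /\ e k = x).

Definition lo (P : nat -> R) e K x := psum P e (rank e K x).

Lemma rank_spec P e K x : is_dec_enum P e K -> 0 < P x -> in_dom K (rank e K x) /\ e (rank e K x) = x.
Proof. intros [A [B [C D]]] Hx. unfold rank. apply epsilon_spec. auto. Qed.

Lemma rank_e P e K k : is_dec_enum P e K -> in_dom K k -> rank e K (e k) = k.
Proof. intros HE Hk. destruct HE as [A [B [C D]]].
  assert (H : in_dom K (rank e K (e k)) /\ e (rank e K (e k)) = e k).
  { unfold rank. apply epsilon_spec. eauto. }
  destruct H. apply B; auto. Qed.

Lemma lo_e P e K k : is_dec_enum P e K -> in_dom K k -> lo P e K (e k) = psum P e k.
Proof. intros. unfold lo. rewrite (rank_e P); auto. Qed.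

Lemma lo_bounds P e K x : is_pmf P -> is_dec_enum P e K -> 0 < P x ->
  0 <= lo P e K x /\ lo P e K x + P x <= 1.
Proof. intros HP HE Hx. destruct (rank_spec P e K x HE Hx) as [D E]. unfold lo. split.
  apply psum_nonneg, HP. assert (L := psum_le1 P e K HP HE _ D). simpl in L. rewrite E in L. lra. Qed.

Lemma cfun_eq P e K k t : is_pmf P -> in_dom K k -> psum P e k <= t < psum P e (S k) ->
  cfun P e K t = ln (/ P (e k)).
Proof. intros HP Hk Ht. unfold cfun.
  assert (H : exists k', in_dom K k' /\ psum P e k' <= t < psum P e (S k') /\
     epsilon (inhabits 0) (fun v => exists k, in_dom K k /\
     psum P e k <= t < psum P e (S k) /\ v = ln (/ P (e k))) = ln (/ P (e k'))).
  { apply epsilon_spec. exists (ln (/ P (e k))). exists k. auto. }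
  destruct H as [k' [Hk' [Ht' ->]]].
  destruct (Nat.lt_trichotomy k k') as [L|[->|L]]; auto.
  - assert (psum P e (S k) <= psum P e k') by (apply psum_mono'; [apply HP|lia]). lra.
  - assert (psum P e (S k') <= psum P e k) by (apply psum_mono'; [apply HP|lia]). lra.
Qed.

Definition clamp (c d t : R) : R := Rmax c (Rmin t d).

Ltac ctac := unfold clamp, Rmax, Rmin in *; repeat (destruct Rle_dec); try lra.

Lemma clamp_lip c d u v : Rabs (clamp c d u - clamp c d v) <= Rabs (u - v).
Proof. unfold clamp, Rmax, Rmin. repeat destruct Rle_dec; unfold Rabs; repeat destruct Rcase_abs; lra. Qed.

Lemma clamp_lip_shift c d s u v : Rabs (clamp c d (u + s) - clamp c d (v + s)) <= Rabs (u - v).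
Proof. replace (u - v) with ((u + s) - (v + s)) by ring. apply clamp_lip. Qed.

Lemma clamp_mono c d u v : u <= v -> clamp c d u <= clamp c d v.
Proof. intros. ctac. Qed.

Lemma clamp_const c d t : c = d -> clamp c d t = c.
Proof. intros. ctac. Qed.

Lemma clamp_sym c d lo hi : lo <= hi -> c <= d ->
  clamp c d hi - clamp c d lo = clamp lo hi d - clamp lo hi c.
Proof. intros. ctac. Qed.

Lemma clamp_pos c d lo hi : lo <= hi -> c <= d -> 0 < clamp c d hi - clamp c d lo ->
  Rmax lo c < Rmin hi d.
Proof. intros. ctac. Qed.

Lemma arith_X a p eps : 0 < eps < 1 -> 0 <= p -> (p = 0 \/ (0 <= a /\ a + p <= 1)) ->
  clamp (a + - eps) (a + p + - eps) 1 - clamp (a + - eps) (a + p + - eps) 0 +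
  (clamp (a + (1 - eps)) (a + p + (1 - eps)) 1 - clamp (a + (1 - eps)) (a + p + (1 - eps)) 0) = p.
Proof. intros He Hp [H|[H1 H2]]; ctac. Qed.

Lemma arith_Y c q eps : 0 < eps < 1 -> 0 <= q -> (q = 0 \/ (0 <= c /\ c + q <= 1)) ->
  clamp c (c + q) (1 + - eps) - clamp c (c + q) (0 + - eps) +
  (clamp c (c + q) (1 + (1 - eps)) - clamp c (c + q) (0 + (1 - eps))) = q.
Proof. intros He Hp [H|[H1 H2]]; ctac. Qed.

Lemma arith_s2 a p eps : 0 < eps < 1 -> 0 <= a -> 0 <= p -> a + p <= 1 ->
  clamp (a + (1 - eps)) (a + p + (1 - eps)) 1 - clamp (a + (1 - eps)) (a + p + (1 - eps)) 0
  = clamp (eps - 1) eps (a + p) - clamp (eps - 1) eps a.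
Proof. intros; ctac. Qed.

Lemma arith_eps eps : 0 < eps < 1 -> clamp (eps - 1) eps 1 - clamp (eps - 1) eps 0 = eps.
Proof. intros; ctac. Qed.

Definition Qs (PX PY : nat -> R) (eX eY : nat -> nat) (KX KY : option nat) (s : R) (x y : nat) : R :=
  clamp (lo PX eX KX x + s) (lo PX eX KX x + PX x + s) (lo PY eY KY y + PY y)
  - clamp (lo PX eX KX x + s) (lo PX eX KX x + PX x + s) (lo PY eY KY y).

Lemma Qs_nonneg PX PY eX eY KX KY s x y : 0 <= PY y -> 0 <= Qs PX PY eX eY KX KY s x y.
Proof. intros. unfold Qs. assert (H' := clamp_mono (lo PX eX KX x + s) (lo PX eX KX x + PX x + s)
  (lo PY eY KY y) (lo PY eY KY y + PY y)). lra. Qed.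

Lemma Qs_posX PX PY eX eY KX KY s x y : is_pmf PX -> 0 < Qs PX PY eX eY KX KY s x y -> 0 < PX x.
Proof. intros [H _] HQ. destruct (Rle_lt_or_eq_dec _ _ (H x)) as [|E]; auto.
  unfold Qs in HQ. rewrite !(clamp_const (lo PX eX KX x + s) (lo PX eX KX x + PX x + s)) in HQ; lra. Qed.

Lemma Qs_posY PX PY eX eY KX KY s x y : is_pmf PY -> 0 < Qs PX PY eX eY KX KY s x y -> 0 < PY y.
Proof. intros [H _] HQ. destruct (Rle_lt_or_eq_dec _ _ (H y)) as [|E]; auto.
  unfold Qs in HQ. rewrite <- E, Rplus_0_r in HQ. lra. Qed.

Lemma sumQs_y PX PY eX eY KX KY s x : is_pmf PY -> is_dec_enum PY eY KY ->
  infinite_sum (fun y => Qs PX PY eX eY KX KY s x y)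
   (clamp (lo PX eX KX x + s) (lo PX eX KX x + PX x + s) 1
    - clamp (lo PX eX KX x + s) (lo PX eX KX x + PX x + s) 0).
Proof. intros HP HE. apply (reindex _ eY KY).
  - intro; apply Qs_nonneg, HP.
  - apply HE.
  - intros y Hy. apply HE. eapply Qs_posY; eauto.
  - eapply isum_ext; [|apply (tele PY eY KY (clamp (lo PX eX KX x + s) (lo PX eX KX x + PX x + s)) HP HE (clamp_lip _ _))].
    intro k. cbv beta. destruct (domb KY k) eqn:D; auto.
    apply domb_iff in D. unfold Qs. rewrite (lo_e PY eY KY k HE D). reflexivity.
Qed.

Lemma sumQs_x PX PY eX eY KX KY s y : is_pmf PX -> is_dec_enum PX eX KX -> is_pmf PY ->
  infinite_sum (fun x => Qs PX PY eX eY KX KY s x y)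
   (clamp (lo PY eY KY y) (lo PY eY KY y + PY y) (1 + s)
    - clamp (lo PY eY KY y) (lo PY eY KY y + PY y) (0 + s)).
Proof. intros HP HE HPY. apply (reindex _ eX KX).
  - intro; apply Qs_nonneg, HPY.
  - apply HE.
  - intros x Hx. apply HE. eapply Qs_posX; eauto.
  - eapply isum_ext; [|apply (tele PX eX KX (fun t => clamp (lo PY eY KY y) (lo PY eY KY y + PY y) (t + s)) HP HE (clamp_lip_shift _ _ _))].
    intro k. cbv beta. destruct (domb KX k) eqn:D; auto.
    apply domb_iff in D. unfold Qs. rewrite (lo_e PX eX KX k HE D).
    rewrite (clamp_sym (psum PX eX k + s)). reflexivity.
    destruct HPY as [H _]; specialize (H y); lra.
    destruct HP as [H _]; specialize (H (eX k)); lra.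
Qed.

Definition Qc PX PY eX eY KX KY eps x y :=
  Qs PX PY eX eY KX KY (- eps) x y + Qs PX PY eX eY KX KY (1 - eps) x y.

Lemma marg_X PX PY eX eY KX KY eps x : is_pmf PX -> is_dec_enum PX eX KX ->
  is_pmf PY -> is_dec_enum PY eY KY -> 0 < eps < 1 ->
  infinite_sum (fun y => Qc PX PY eX eY KX KY eps x y) (PX x).
Proof. intros HP HE HPY HEY Heps.
  rewrite <- (arith_X (lo PX eX KX x) (PX x) eps Heps).
  - apply isum_plus; apply sumQs_y; auto.
  - apply HP.
  - destruct (Rle_lt_or_eq_dec _ _ (proj1 HP x)) as [H|H]; [right|left; auto].
    apply lo_bounds; auto.
Qed.

Lemma marg_Y PX PY eX eY KX KY eps y : is_pmf PX -> is_dec_enum PX eX KX ->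
  is_pmf PY -> is_dec_enum PY eY KY -> 0 < eps < 1 ->
  infinite_sum (fun x => Qc PX PY eX eY KX KY eps x y) (PY y).
Proof. intros HP HE HPY HEY Heps.
  rewrite <- (arith_Y (lo PY eY KY y) (PY y) eps Heps).
  - apply isum_plus; apply sumQs_x; auto.
  - apply HPY.
  - destruct (Rle_lt_or_eq_dec _ _ (proj1 HPY y)) as [H|H]; [right|left; auto].
    apply lo_bounds; auto.
Qed.

Definition s2 PX eX KX eps x :=
  clamp (lo PX eX KX x + (1 - eps)) (lo PX eX KX x + PX x + (1 - eps)) 1
  - clamp (lo PX eX KX x + (1 - eps)) (lo PX eX KX x + PX x + (1 - eps)) 0.

Lemma sum_s2 PX eX KX eps : is_pmf PX -> is_dec_enum PX eX KX -> 0 < eps < 1 ->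
  infinite_sum (s2 PX eX KX eps) eps.
Proof. intros HP HE Heps. apply (reindex _ eX KX).
  - intro x. unfold s2. assert (H := clamp_mono (lo PX eX KX x + (1 - eps)) (lo PX eX KX x + PX x + (1 - eps)) 0 1). lra.
  - apply HE.
  - intros x Hx. apply HE. destruct (Rle_lt_or_eq_dec _ _ (proj1 HP x)) as [|E]; auto.
    unfold s2 in Hx. rewrite !(clamp_const (lo PX eX KX x + (1 - eps))) in Hx; lra.
  - assert (T := tele PX eX KX (clamp (eps - 1) eps) HP HE (clamp_lip _ _)).
    rewrite (arith_eps eps Heps) in T.
    eapply isum_ext; [|exact T].
    intro k. cbv beta. destruct (domb KX k) eqn:D; auto.
    apply domb_iff in D. unfold s2. rewrite (lo_e PX eX KX k HE D).
    rewrite arith_s2; auto.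
    + apply psum_nonneg, HP.
    + apply HP.
    + apply (psum_le1 PX eX KX HP HE k D).
Qed.

Lemma Q1_good PX PY eX eY KX KY eps x y : is_pmf PX -> is_dec_enum PX eX KX ->
  is_pmf PY -> is_dec_enum PY eY KY -> 0 < eps < 1 ->
  (forall delta, 0 <= delta < 1 - eps ->
     cfun PX eX KX (delta + eps) - cfun PY eY KY delta >= -1) ->
  0 < Qs PX PY eX eY KX KY (- eps) x y -> ln (/ PX x) - ln (/ PY y) >= -1.
Proof. intros HP HE HPY HEY Heps Hg HQ.
  assert (Hx := Qs_posX _ _ _ _ _ _ _ _ _ HP HQ).
  assert (Hy := Qs_posY _ _ _ _ _ _ _ _ _ HPY HQ).
  destruct (rank_spec PX eX KX x HE Hx) as [Dk Ek].
  destruct (rank_spec PY eY KY y HEY Hy) as [Dj Ej].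
  destruct (lo_bounds PX eX KX x HP HE Hx) as [Ba1 Ba2].
  destruct (lo_bounds PY eY KY y HPY HEY Hy) as [Bc1 Bc2].
  unfold Qs in HQ. apply clamp_pos in HQ; [|lra|lra].
  set (a := lo PX eX KX x) in *. set (c := lo PY eY KY y) in *.
  set (d := Rmax c (a + - eps)) in *.
  assert (c <= d) by apply Rmax_l. assert (a + - eps <= d) by apply Rmax_r.
  assert (d < c + PY y) by (eapply Rlt_le_trans; [exact HQ|apply Rmin_l]).
  assert (d < a + PX x + - eps) by (eapply Rlt_le_trans; [exact HQ|apply Rmin_r]).
  assert (EX : cfun PX eX KX (d + eps) = ln (/ PX x)).
  { rewrite <- Ek. apply cfun_eq; auto. simpl. rewrite Ek. unfold a, lo in *. lra. }
  assert (EY : cfun PY eY KY d = ln (/ PY y)).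
  { rewrite <- Ej. apply cfun_eq; auto. simpl. rewrite Ej. unfold c, lo in *. lra. }
  rewrite <- EX, <- EY. apply Hg. lra.
Qed.

Definition eps_of (m : nat) : R := / INR (m + 2).

Lemma eps_of_bounds m : 0 < eps_of m < 1.
Proof. unfold eps_of. assert (H : 1 < INR (m + 2)).
  { rewrite plus_INR. simpl. assert (0 <= INR m) by apply pos_INR. lra. }
  split. apply Rinv_0_lt_compat; lra.
  rewrite <- Rinv_1. apply Rinv_lt_contravar; lra. Qed.

Lemma eps_of_mono m m' : (m <= m')%nat -> eps_of m' <= eps_of m.
Proof. intros H. unfold eps_of. apply Rinv_le_contravar.
  rewrite plus_INR; simpl; assert (0 <= INR m) by apply pos_INR; lra.
  apply le_INR; lia. Qed.

Lemma eps_of_small e0 : 0 < e0 -> exists M, eps_of M < e0.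
Proof. intros H. destruct (INR_archimed e0 1 H) as [M HM]. exists M.
  unfold eps_of. assert (0 <= INR M) by apply pos_INR.
  assert (HI : INR M < INR (M + 2)) by (apply lt_INR; lia).
  apply Rmult_lt_reg_l with (INR (M + 2)). lra.
  rewrite Rinv_r by lra. nra. Qed.

Fixpoint bestrec (G : nat -> Prop) (k : nat) : nat :=
  match k with
  | O => O
  | S k' => if excluded_middle_informative (G (S k')) then S k' else bestrec G k'
  end.

Lemma bestrec_spec G k j : (j <= k)%nat -> G j -> (j <= bestrec G k)%nat /\ G (bestrec G k).
Proof. induction k; intros Hj Gj.
  - simpl. assert (j = 0%nat) by lia. subst. auto.
  - simpl. destruct (excluded_middle_informative (G (S k))) as [g|g]; [split; auto|].
    destruct (Nat.eq_dec j (S k)) as [->|]; [contradiction|]. apply IHk; auto; lia.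
Qed.

Definition good (PX PY : nat -> nat -> R) (eX eY : nat -> nat -> nat) (KX KY : nat -> option nat)
  (n m : nat) : Prop :=
  forall delta, 0 <= delta < 1 - eps_of m ->
    cfun (PX n) (eX n) (KX n) (delta + eps_of m) - cfun (PY n) (eY n) (KY n) delta >= - 1.

Lemma event_false (n : nat) (gamma A B : R) : 0 < gamma -> INR n * gamma > 1 ->
  A - B >= -1 -> / INR n * A - / INR n * B < - gamma -> False.
Proof. intros Hg Hn HAB Hev.
  assert (Hp : 0 < INR n).
  { destruct (Rle_lt_or_eq_dec _ _ (pos_INR n)) as [|E]; auto. rewrite <- E in Hn. lra. }
  assert (E : A - B = INR n * (/ INR n * A - / INR n * B)) by (field; lra).
  assert (INR n * (/ INR n * A - / INR n * B) < INR n * (- gamma)) by (apply Rmult_lt_compat_l; auto).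
  lra.
Qed.

Theorem theorem3
  (PX PY : nat -> nat -> R)
  (eX eY : nat -> nat -> nat) (KX KY : nat -> option nat)
  (hPX : forall n, is_pmf (PX n)) (hPY : forall n, is_pmf (PY n))
  (heX : forall n, is_dec_enum (PX n) (eX n) (KX n))
  (heY : forall n, is_dec_enum (PY n) (eY n) (KY n))
  (hyp : forall eps, 0 < eps < 1 -> forall eta, 0 < eta ->
     exists N : nat, forall n : nat, (N <= n)%nat ->
       forall delta, 0 <= delta < 1 - eps ->
         cfun (PX n) (eX n) (KX n) (delta + eps)
           - cfun (PY n) (eY n) (KY n) delta >= - eta) :
  exists Q : nat -> nat -> nat -> R,
    (forall n, is_coupling (PX n) (PY n) (Q n)) /\
    forall gamma, 0 < gamma ->
      exists p : nat -> R,
        (forall n, prob_is (Q n)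
           (fun x y => / INR n * ln (/ PX n x) - / INR n * ln (/ PY n y) < - gamma)
           (fun x y => Rlt_dec (/ INR n * ln (/ PX n x) - / INR n * ln (/ PY n y)) (- gamma))
           (p n)) /\
        Un_cv p 0.
Proof.
  set (bn := fun n => bestrec (good PX PY eX eY KX KY n) n).
  set (epsn := fun n => eps_of (bn n)).
  set (Q := fun n => Qc (PX n) (PY n) (eX n) (eY n) (KX n) (KY n) (epsn n)).
  assert (He : forall n, 0 < epsn n < 1) by (intro; apply eps_of_bounds).
  assert (HQ0 : forall n x y, 0 <= Q n x y).
  { intros n x y. unfold Q, Qc.
    assert (H1 := Qs_nonneg (PX n) (PY n) (eX n) (eY n) (KX n) (KY n) (- epsn n) x y (proj1 (hPY n) y)).
    assert (H2 := Qs_nonneg (PX n) (PY n) (eX n) (eY n) (KX n) (KY n) (1 - epsn n) x y (proj1 (hPY n) y)).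
    lra. }
  exists Q. split.
  { intro n. split; [|split].
    - apply HQ0.
    - intro x. apply marg_X; auto.
    - intro y. apply marg_Y; auto. }
  intros gamma Hgamma.
  set (W := fun n x y => if Rlt_dec (/ INR n * ln (/ PX n x) - / INR n * ln (/ PY n y)) (- gamma)
                         then Q n x y else 0).
  assert (HW : forall n x y, 0 <= W n x y <= Q n x y).
  { intros n x y. unfold W. destruct Rlt_dec; split; auto; try lra; apply HQ0. }
  set (r := fun n x => epsilon (inhabits 0) (fun F => infinite_sum (W n x) F)).
  assert (Hr : forall n x, infinite_sum (W n x) (r n x)).
  { intros n x. unfold r. apply epsilon_spec.
    destruct (isum_compare (W n x) (Q n x) (PX n x) (HW n x)) as [F [HF _]].
    apply marg_X; auto. eauto. }
  assert (Hr0 : forall n x, 0 <= r n x <= PX n x).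
  { intros n x. split. apply (isum_nonneg (W n x)); auto. intro; apply HW.
    apply (isum_le (W n x) (Q n x)); auto. intro; apply HW. apply marg_X; auto. }
  set (p := fun n => epsilon (inhabits 0) (fun s => infinite_sum (r n) s)).
  assert (Hp : forall n, infinite_sum (r n) (p n)).
  { intros n. unfold p. apply epsilon_spec.
    destruct (isum_compare (r n) (PX n) 1 (Hr0 n)) as [F [HF _]]. apply hPX. eauto. }
  assert (Hp0 : forall n, 0 <= p n) by (intro n; apply (isum_nonneg (r n)); auto; intro; apply Hr0).
  exists p. split.
  { intro n. exists (r n). split; [intro x; exact (Hr n x) | exact (Hp n)]. }
  intros e0 He0.
  destruct (eps_of_small e0 He0) as [M HM].
  destruct (hyp (eps_of M) (eps_of_bounds M) 1 Rlt_0_1) as [N1 HN1].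
  destruct (INR_archimed gamma 1 Hgamma) as [N2 HN2].
  exists (Nat.max M (Nat.max N1 N2)). intros n Hn.
  assert (Hgood : good PX PY eX eY KX KY n M).
  { intros d Hd. apply (HN1 n); auto; lia. }
  destruct (bestrec_spec (good PX PY eX eY KX KY n) n M) as [Hb Hgb]; [lia|exact Hgood|].
  fold (bn n) in Hb, Hgb.
  assert (Hepsn : epsn n < e0).
  { apply Rle_lt_trans with (eps_of M); auto. apply eps_of_mono; auto. }
  assert (Hng : INR n * gamma > 1).
  { assert (INR N2 <= INR n) by (apply le_INR; lia). nra. }
  assert (HW2 : forall x y, W n x y <= Qs (PX n) (PY n) (eX n) (eY n) (KX n) (KY n) (1 - epsn n) x y).
  { intros x y. unfold W. destruct Rlt_dec as [Hev|Hev].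
    - unfold Q, Qc.
      assert (H1 := Qs_nonneg (PX n) (PY n) (eX n) (eY n) (KX n) (KY n) (- epsn n) x y (proj1 (hPY n) y)).
      destruct (Rle_lt_or_eq_dec _ _ H1) as [Hpos|Hz]; [|rewrite <- Hz; lra].
      exfalso. apply (event_false n gamma (ln (/ PX n x)) (ln (/ PY n y))); auto.
      apply (Q1_good (PX n) (PY n) (eX n) (eY n) (KX n) (KY n) (epsn n)); auto.
    - apply Qs_nonneg, hPY. }
  assert (Hrs : forall x, r n x <= s2 (PX n) (eX n) (KX n) (epsn n) x).
  { intro x. apply (isum_le (W n x) (fun y => Qs (PX n) (PY n) (eX n) (eY n) (KX n) (KY n) (1 - epsn n) x y)); auto.
    apply sumQs_y; auto. }
  assert (Hpe : p n <= epsn n).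
  { apply (isum_le (r n) (s2 (PX n) (eX n) (KX n) (epsn n))); auto. apply sum_s2; auto. }
  unfold R_dist. rewrite Rminus_0_r, Rabs_pos_eq; auto. lra.
Qed.
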